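(* On torsionfree bornological \(V\)-modules, the assignment \(M\mapsto M'\) is right adjoint to the inclusion of the full subcategory of nuclear, torsionfree bornological \(V\)-modules into the category of torsionfree bornological \(V\)-modules (with bounded \(V\)-linear maps as morphisms). That is, for every torsionfree bornological \(V\)-module \(N\), \(N'\) is a nuclear torsionfree bornological \(V\)-module, and for every nuclear torsionfree bornological \(V\)-module \(M\), a \(V\)-linear map \(M\to N\) is bounded if and only if it is bounded as a map \(M\to N'\).
   Context: Let \(V\) be a complete discrete valuation ring with uniformiser \(\pi\) and fraction field \(F\). A bornology on a set is a collection of subsets (called bounded) containing all finite subsets and closed under finite unions and under taking subsets. A bornological \(V\)-module is a \(V\)-module with a bornology such that every bounded subset is contained in a bounded \(V\)-submodule; a \(V\)-linear map is bounded if it maps bounded subsets to bounded subsets. \(M\) is torsionfree if it is torsionfree as a \(V\)-module and \(\pi^{-1}S=\{x:\pi x\in S\}\) is bounded for every bounded \(S\). A subset \(S\subseteq M\) is compactoid if there is a bounded \(V\)-submodule \(T\subseteq M\) with \(S\subseteq T\) such that for every \(n\in\mathbb N\) there is a finite set \(F_n\subseteq T\) with \(S\subseteq VF_n+\pi^nT\). \(M'\) denotes \(M\) with the bornology of compactoid subsets; \(M\) is nuclear if every bounded subset of \(M\) is compactoid. *)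

(* Defs.v *)
From HB Require Import structures.
From mathcomp Require Import all_boot all_order all_algebra.
From mathcomp Require Import classical_sets cardinality.
Set Implicit Arguments. Unset Strict Implicit. Unset Printing Implicit Defensive.
Import GRing.Theory.
Local Open Scope classical_set_scope.
Local Open Scope ring_scope.

Definition is_uniformiser (V : idomainType) (pi : V) : Prop :=
  pi != 0 /\ pi \isn't a GRing.unit /\
  forall x : V, x != 0 -> exists (u : V) (n : nat), u \is a GRing.unit /\ x = u * pi ^+ n.

Definition pi_complete (V : idomainType) (pi : V) : Prop :=
  forall x : nat -> V, (forall n, exists y, x n.+1 - x n = pi ^+ n * y) ->
    exists l : V, forall n, exists y, l - x n = pi ^+ n * y.

Definition complete_dvr (V : idomainType) (pi : V) : Prop :=
  is_uniformiser pi /\ pi_complete pi.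

Definition is_bornology (T : Type) (B : set (set T)) : Prop :=
  (forall A : set T, finite_set A -> B A) /\
  (forall A C : set T, B A -> B C -> B (A `|` C)) /\
  (forall A C : set T, B A -> C `<=` A -> B C).

Definition is_submodule (V : pzRingType) (M : lmodType V) (S : set M) : Prop :=
  S 0 /\ (forall x y, S x -> S y -> S (x + y)) /\ (forall (a : V) x, S x -> S (a *: x)).

Definition born_module (V : pzRingType) (M : lmodType V) (B : set (set M)) : Prop :=
  is_bornology B /\
  forall S, B S -> exists T, B T /\ is_submodule T /\ S `<=` T.

Definition tf_born_module (V : pzRingType) (pi : V) (M : lmodType V)
    (B : set (set M)) : Prop :=
  born_module B /\
  (forall (a : V) (x : M), a *: x = 0 -> a = 0 \/ x = 0) /\
  (forall S, B S -> B [set x | S (pi *: x)]).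

Definition compactoid (V : pzRingType) (pi : V) (M : lmodType V)
    (B : set (set M)) (S : set M) : Prop :=
  exists T : set M, B T /\ is_submodule T /\ S `<=` T /\
    forall n : nat, exists F : seq M, (forall f, f \in F -> T f) /\
      forall x, S x -> exists (a : 'I_(size F) -> V) (t : M),
        T t /\ x = \sum_(i < size F) a i *: F`_i + pi ^+ n *: t.

(* the bornology of M' *)
Definition compactoid_born (V : pzRingType) (pi : V) (M : lmodType V)
    (B : set (set M)) : set (set M) := [set S | compactoid pi B S].

Definition nuclear (V : pzRingType) (pi : V) (M : lmodType V)
    (B : set (set M)) : Prop :=
  forall S, B S -> compactoid pi B S.

Definition bounded_map (T U : Type) (BT : set (set T)) (BU : set (set U))
    (f : T -> U) : Prop :=
  forall S, BT S -> BU (f @` S).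

(* Main.v *)
Require Import Defs.
From mathcomp Require Import all_boot all_order all_algebra.
From mathcomp Require Import classical_sets cardinality.
From mathcomp Require Import zify boolp.
Set Implicit Arguments. Unset Strict Implicit. Unset Printing Implicit Defensive.
Import GRing.Theory.
Local Open Scope classical_set_scope.
Local Open Scope ring_scope.

Definition spanN (V : pzRingType) (M : lmodType V) (F : seq M) : set M :=
  fun x => exists a : nat -> V, x = \sum_(i < size F) a i *: F`_i.

Lemma spanN_nil (V : pzRingType) (M : lmodType V) (x : M) :
  spanN [::] x <-> x = 0.
Proof.
split=> [[a ->]|->]; first by rewrite big_ord0.
by exists (fun=> 0); rewrite big_ord0.
Qed.

Lemma spanN_cons (V : pzRingType) (M : lmodType V) (f : M) F x :
  spanN (f :: F) x <-> exists c y, spanN F y /\ x = c *: f + y.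
Proof.
split.
  move=> [a ->]; rewrite /= big_ord_recl /=.
  exists (a 0%N), (\sum_(i < size F) a i.+1 *: F`_i); split => //.
  by exists (fun i => a i.+1).
move=> [c [y [[b ->] ->]]].
exists (fun i => if i is k.+1 then b k else c).
by rewrite /= big_ord_recl /=.
Qed.

Lemma spanN0 (V : pzRingType) (M : lmodType V) (F : seq M) : spanN F 0.
Proof. by exists (fun=> 0); rewrite big1 // => i _; rewrite scale0r. Qed.

Lemma spanND (V : pzRingType) (M : lmodType V) (F : seq M) x y :
  spanN F x -> spanN F y -> spanN F (x + y).
Proof.
move=> [a ->] [b ->]; exists (fun i => a i + b i).
by rewrite -big_split /=; apply: eq_bigr => i _; rewrite scalerDl.
Qed.

Lemma spanNZ (V : pzRingType) (M : lmodType V) (F : seq M) (c : V) x :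
  spanN F x -> spanN F (c *: x).
Proof.
move=> [a ->]; exists (fun i => c * a i).
by rewrite scaler_sumr; apply: eq_bigr => i _; rewrite scalerA.
Qed.

Lemma spanNN (V : pzRingType) (M : lmodType V) (F : seq M) x :
  spanN F x -> spanN F (- x).
Proof. by move=> h; rewrite -scaleN1r; apply: spanNZ. Qed.

Lemma spanNB (V : pzRingType) (M : lmodType V) (F : seq M) x y :
  spanN F x -> spanN F y -> spanN F (x - y).
Proof. by move=> hx hy; apply: spanND => //; apply: spanNN. Qed.

Lemma spanN_sub (V : pzRingType) (M : lmodType V) (F G : seq M) :
  (forall f, f \in F -> spanN G f) -> forall x, spanN F x -> spanN G x.
Proof.
elim: F => [|f F IH] hF x.
  by move/spanN_nil ->; apply: spanN0.
move/spanN_cons=> [c [y [hy ->]]]; apply: spanND.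
  by apply: spanNZ; apply: hF; rewrite inE eqxx.
by apply: IH => // g hg; apply: hF; rewrite inE hg orbT.
Qed.

Lemma spanN_mem (V : pzRingType) (M : lmodType V) (F : seq M) f :
  f \in F -> spanN F f.
Proof.
elim: F => [//|g F IH]; rewrite inE => /orP [/eqP ->|h]; apply/spanN_cons.
  by exists 1, 0; split; [apply: spanN0 | rewrite scale1r addr0].
by exists 0, f; split; [apply: IH | rewrite scale0r add0r].
Qed.

Lemma spanN_catl (V : pzRingType) (M : lmodType V) (F G : seq M) x :
  spanN F x -> spanN (F ++ G) x.
Proof. apply: spanN_sub => f hf; apply: spanN_mem; by rewrite mem_cat hf. Qed.

Lemma spanN_catr (V : pzRingType) (M : lmodType V) (F G : seq M) x :
  spanN G x -> spanN (F ++ G) x.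
Proof. apply: spanN_sub => f hf; apply: spanN_mem; by rewrite mem_cat hf orbT. Qed.

Lemma spanN_submod (V : pzRingType) (M : lmodType V) (F : seq M) (T : set M) :
  is_submodule T -> (forall f, f \in F -> T f) -> forall x, spanN F x -> T x.
Proof.
move=> [T0 [TD TZ]]; elim: F => [|f F IH] hF x.
  by move/spanN_nil ->.
move/spanN_cons=> [c [y [hy ->]]]; apply: TD.
  by apply: TZ; apply: hF; rewrite inE eqxx.
by apply: IH => // g hg; apply: hF; rewrite inE hg orbT.
Qed.

Lemma spanN_is_submod (V : pzRingType) (M : lmodType V) (F : seq M) :
  is_submodule (spanN F).
Proof. split; [exact: spanN0|split; [exact: spanND| exact: spanNZ]]. Qed.

Lemma spanN_map (V : pzRingType) (M N : lmodType V) (f : {linear M -> N}) (F : seq M) x :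
  spanN F x -> spanN (map f F) (f x).
Proof.
elim: F x => [|g F IH] x.
  by move/spanN_nil ->; rewrite linear0; apply: spanN0.
move/spanN_cons=> [c [y [hy ->]]]; apply/spanN_cons.
by exists c, (f y); split; [apply: IH | rewrite linearD linearZ].
Qed.

Lemma spanN_mapZ (V : comPzRingType) (M : lmodType V) (c : V) (F : seq M) x :
  spanN (map ( *:%R c) F) x -> exists y, spanN F y /\ x = c *: y.
Proof.
elim: F x => [|g F IH] x.
  by move/spanN_nil ->; exists 0; split; [apply: spanN0 | rewrite scaler0].
move/spanN_cons=> [d [y [/IH [z [hz ->]] ->]]].
exists (d *: g + z); split.
  by apply/spanN_cons; exists d, z.
by rewrite scalerDr !scalerA mulrC.
Qed.

Lemma fg (V : idomainType) (pi : V) (hpi : is_uniformiser pi) (M : lmodType V)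
  (L : seq M) (P : set M) : is_submodule P -> (forall x, P x -> spanN L x) ->
  exists G : seq M, (forall g, g \in G -> P g) /\ forall x, P x -> spanN G x.
Proof.
have [pi0 [piU hdec]] := hpi.
elim: L P => [|f L IH] P hP hPL.
  exists [::]; split => // x /hPL /spanN_nil ->; exact: spanN0.
have [P0 [PD PZ]] := hP.
pose I c := exists y, spanN L y /\ P (c *: f + y).
have IZ a c : I c -> I (a * c).
  move=> [y [hy hP']]; exists (a *: y); split; first exact: spanNZ.
  by rewrite -scalerA -scalerDr; apply: (PZ).
have Ipow c : c != 0 -> I c -> exists u k, [/\ u \is a GRing.unit, c = u * pi ^+ k & I (pi ^+ k)].
  move=> c0 Ic; have [u [k [uU cE]]] := hdec c c0.
  exists u, k; split => //.
  by have := IZ u^-1 _ Ic; rewrite cE mulrA mulVr // mul1r.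
case: (pselect (exists c, c != 0 /\ I c)) => [[c [c0 Ic]]|nI].
  have exk : exists k, `[< I (pi ^+ k) >].
    have [u [k [_ _ h]]] := Ipow c c0 Ic; exists k; exact/asboolP.
  case: (ex_minnP exk) => m /asboolP Im minm.
  have [y0 [hy0 Pp0]] := Im.
  pose P' := fun x => P x /\ spanN L x.
  have hP' : is_submodule P'.
    split; first by split => //; exact: spanN0.
    split; first by move=> x y [? ?] [? ?]; split; [apply: (PD) | apply: spanND].
    by move=> a x [? ?]; split; [apply: (PZ) | apply: spanNZ].
  have [G' [G'P G'sp]] := IH P' hP' (fun x h => h.2).
  exists ((pi ^+ m *: f + y0) :: G'); split.
    move=> g; rewrite inE => /orP [/eqP ->|/G'P []] //.
  move=> x Px; have := hPL x Px => /spanN_cons [c' [y [hy xE]]].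
  have [d cE] : exists d, c' = d * pi ^+ m.
    case: (eqVneq c' 0) => [->|c'0]; first by exists 0; rewrite mul0r.
    have Pc : P (c' *: f + y) by rewrite -xE.
    have [u [k [uU ck Ik]]] := Ipow c' c'0 (ex_intro _ y (conj hy Pc)).
    have mk : (m <= k)%N by apply: minm; apply/asboolP.
    exists (u * pi ^+ (k - m)); rewrite ck -mulrA -exprD subnK //.
  apply/spanN_cons; exists d, (x - d *: (pi ^+ m *: f + y0)); split; last first.
    by rewrite addrC subrK.
  apply: G'sp; split.
    apply: (PD) => //; rewrite -scaleN1r; apply: (PZ); exact: (PZ).
  have -> : x - d *: (pi ^+ m *: f + y0) = y - d *: y0.
    by rewrite xE cE scalerDr scalerA -scalerA; rewrite opprD addrACA subrr add0r.
  by apply: spanNB => //; apply: spanNZ.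
have := IH P hP; case.
  move=> x Px; have := hPL x Px => /spanN_cons [c' [y [hy xE]]].
  have c'0 : c' = 0.
    apply/eqP; apply/negPn/negP => c'0; apply: nI; exists c'; split => //.
    by exists y; split => //; rewrite -xE.
  by rewrite xE c'0 scale0r add0r.
by move=> G hG; exists G.
Qed.

Lemma lift_list (V : pzRingType) (M : lmodType V) (c : V) (T : set M) (G : seq M) :
  (forall g, g \in G -> exists z, T z /\ g = c *: z) ->
  exists G', (forall z, z \in G' -> T z) /\ G = map ( *:%R c) G'.
Proof.
elim: G => [|g G IH] h; first by exists [::].
have [z [Tz ->]] := h g (mem_head _ _).
have [G' [hG' ->]] : exists G', (forall z, z \in G' -> T z) /\ G = map ( *:%R c) G'.
  by apply: IH => g' hg'; apply: h; rewrite inE hg' orbT.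
exists (z :: G'); split => //= z'; rewrite inE => /orP [/eqP ->|] //; exact: hG'.
Qed.

Lemma tf_cancel (V : idomainType) (M : lmodType V) (c : V) (x y : M) :
  (forall (a : V) (x : M), a *: x = 0 -> a = 0 \/ x = 0) ->
  c != 0 -> c *: x = c *: y -> x = y.
Proof.
move=> htf c0 e; have : c *: (x - y) = 0 by rewrite scalerBr e subrr.
by case/htf => [/eqP|/eqP]; [rewrite (negbTE c0) | rewrite subr_eq0 => /eqP].
Qed.

Lemma fg_div (V : idomainType) (pi : V) (hpi : is_uniformiser pi) (M : lmodType V)
  (htf : forall (a : V) (x : M), a *: x = 0 -> a = 0 \/ x = 0)
  (L : seq M) (T : set M) (j : nat) : is_submodule T ->
  exists G', (forall g, g \in G' -> T g) /\
    forall z, T z -> spanN L (pi ^+ j *: z) -> spanN G' z.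
Proof.
move=> [T0 [TD TZ]].
pose P := fun y => spanN L y /\ exists z, T z /\ y = pi ^+ j *: z.
have hP : is_submodule P.
  split; first by split; [apply: spanN0 | exists 0; rewrite scaler0].
  split.
    move=> x y [hx [z [Tz xE]]] [hy [z' [Tz' yE]]]; split; first exact: spanND hx hy.
    by exists (z + z'); split; [apply: TD | rewrite scalerDr xE yE].
  move=> a x [hx [z [Tz xE]]]; split; first exact: spanNZ hx.
  by exists (a *: z); split; [apply: TZ | rewrite xE !scalerA mulrC].
have [G [GP Gsp]] := fg hpi hP (fun x h => h.1).
have [G' [G'T GE]] := lift_list (c := pi ^+ j) (T := T) (G := G) (fun g hg => (GP g hg).2).
exists G'; split => // z Tz hz.
have : P (pi ^+ j *: z) by split => //; exists z.
move/Gsp; rewrite GE => /spanN_mapZ [y [hy e]].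
have -> // : z = y.
apply: (tf_cancel htf _ e); apply: expf_neq0; exact: hpi.1.
Qed.

Definition cpt (V : pzRingType) (pi : V) (M : lmodType V)
    (B : set (set M)) (S : set M) : Prop :=
  exists T : set M, B T /\ is_submodule T /\ S `<=` T /\
    forall n : nat, exists F : seq M, (forall f, f \in F -> T f) /\
      forall x, S x -> exists s t, spanN F s /\ T t /\ x = s + pi ^+ n *: t.

Lemma compactoidE (V : pzRingType) (pi : V) (M : lmodType V) (B : set (set M)) S :
  compactoid pi B S <-> cpt pi B S.
Proof.
split=> [[T [BT [hT [ST hF]]]]|[T [BT [hT [ST hF]]]]]; exists T; do 3 split => //;
  move=> n; have [F [FT hx]] := hF n; exists F; split => // x Sx.
  have [a [t [Tt ->]]] := hx x Sx.
  exists (\sum_(i < size F) a i *: F`_i), t; split => //.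
  exists (fun k => if insub k is Some i then a i else 0).
  apply: eq_bigr => i _; case: insubP => [j _ /val_inj -> //|].
  by rewrite ltn_ord.
have [s [t [[a ->] [Tt ->]]]] := hx x Sx.
by exists (fun i => a i), t.
Qed.

Lemma spanN_mapZ' (V : comPzRingType) (M : lmodType V) (c : V) (F : seq M) y :
  spanN F y -> spanN (map ( *:%R c) F) (c *: y).
Proof.
elim: F y => [|g F IH] y.
  by move/spanN_nil ->; rewrite scaler0; apply: spanN0.
move/spanN_cons=> [d [z [hz ->]]]; apply/spanN_cons.
exists d, (c *: z); split; first exact: IH.
by rewrite scalerDr !scalerA mulrC.
Qed.

Lemma helper (M : zmodType) (a b c d : M) : c + a = d + b -> a - b = d - c.
Proof.
by move=> e; apply/eqP; rewrite subr_eq addrAC eq_sym subr_eq -e addrC.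
Qed.

Lemma key (V : idomainType) (pi : V) (hpi : is_uniformiser pi) (M : lmodType V)
  (htf : forall (a : V) (x : M), a *: x = 0 -> a = 0 \/ x = 0)
  (B : set (set M)) (hsub : forall A C : set M, B A -> C `<=` A -> B C) (S : set M) :
  cpt pi B S -> exists U, cpt pi B U /\ is_submodule U /\ S `<=` U /\
    forall n, exists Q : seq M, (forall q, q \in Q -> U q) /\
      forall x, S x -> exists s u, spanN Q s /\ U u /\ x = s + pi ^+ n *: u.
Proof.
move=> [T [BT [hT [ST hF]]]].
have [T0 [TD TZ]] := hT.
have [F hFF] := choice hF.
have FT n f : f \in F n -> T f by move: (hFF n) => [h _]; exact: h.
have FS n x : S x -> exists s t, spanN (F n) s /\ T t /\ x = s + pi ^+ n *: t.
  by move: (hFF n) => [_ h]; exact: h.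
have hG : forall k, exists G', (forall g, g \in G' -> T g) /\
    forall z, T z -> spanN (F k.*2 ++ F k.+1.*2) (pi ^+ k.*2 *: z) -> spanN G' z.
  by move=> k; apply: fg_div.
have [G hGG] := choice hG.
have GT k g : g \in G k -> T g by move: (hGG k) => [h _]; exact: h.
have Gsp k z : T z -> spanN (F k.*2 ++ F k.+1.*2) (pi ^+ k.*2 *: z) -> spanN (G k) z.
  by move: (hGG k) => [_ h]; exact: h.
pose Q N := F 0%N ++ flatten [seq map ( *:%R (pi ^+ k)) (G k) | k <- iota 0 N].
have Qmem N k y : (k < N)%N -> spanN (G k) y -> spanN (Q N) (pi ^+ k *: y).
  move=> kN /(spanN_mapZ' (pi ^+ k)); apply: spanN_sub => q hq.
  apply: spanN_mem; rewrite mem_cat; apply/orP; right; apply/flattenP.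
  exists (map ( *:%R (pi ^+ k)) (G k)) => //.
  by apply: (map_f (fun k => map ( *:%R (pi ^+ k)) (G k))); rewrite mem_iota.
have Qcase N q : q \in Q N -> q \in F 0%N \/ exists k g, [/\ (k < N)%N, g \in G k & q = pi ^+ k *: g].
  rewrite mem_cat => /orP [h|/flattenP [s' /mapP [k hk ->] /mapP [g hg ->]]]; first by left.
  by right; exists k, g; split => //; move: hk; rewrite mem_iota.
have QT N q : q \in Q N -> T q.
  by case/Qcase => [/FT //|[k [g [_ /GT Tg ->]]]]; apply: (TZ).
pose W N := fun y => exists s t, spanN (Q N) s /\ T t /\ y = s + pi ^+ N *: t.
have hW N : is_submodule (W N).
  split; first by exists 0, 0; rewrite scaler0 addr0; split => //; apply: spanN0.
  split.
    move=> x y [s [t [hs [Tt ->]]]] [s' [t' [hs' [Tt' ->]]]].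
    exists (s + s'), (t + t'); split; first exact: spanND.
    by split; [apply: (TD) | rewrite scalerDr addrACA].
  move=> a x [s [t [hs [Tt ->]]]]; exists (a *: s), (a *: t); split; first exact: spanNZ.
  by split; [apply: (TZ) | rewrite scalerDr !scalerA mulrC].
have Wbig N k z : (N <= k)%N -> T z -> W N (pi ^+ k *: z).
  move=> Nk Tz; exists 0, (pi ^+ (k - N) *: z); split; first exact: spanN0.
  by split; [apply: (TZ) | rewrite add0r scalerA -exprD subnKC].
have WQ N s : spanN (Q N) s -> W N s.
  by move=> hs; exists s, 0; rewrite scaler0 addr0.
pose U := fun y => T y /\ forall N, W N y.
have hU : is_submodule U.
  split; first by split => // N; have [] := hW N.
  split.
    by move=> x y [Tx Wx] [Ty Wy]; split; [apply: (TD) | move=> N; have [_ [h _]] := hW N; apply: h].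
  by move=> a x [Tx Wx]; split; [apply: (TZ) | move=> N; have [_ [_ h]] := hW N; apply: h].
have QU N q : q \in Q N -> U q.
  move=> hq; split; first exact: QT hq.
  move=> N'; case/Qcase: hq => [hq|[k [g [_ hg ->]]]].
    by apply: WQ; apply: spanN_mem; rewrite mem_cat hq.
  case: (ltnP k N') => kN'.
    by apply: WQ; apply: Qmem => //; apply: spanN_mem.
  exact: Wbig kN' (GT _ _ hg).
have decomp x : S x -> (forall n, U (pi ^+ n *: x) -> True) /\
    forall n, exists s u, spanN (Q n) s /\ U u /\ x = s + pi ^+ n *: u.
  move=> Sx; split => // n.
  have [s hst] := choice (fun k => FS k.*2 x Sx).
  have [t hst'] := choice hst.
  have st k : [/\ spanN (F k.*2) (s k), T (t k) & x = s k + pi ^+ k.*2 *: t k].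
    by have [? [? ?]] := hst' k.
  pose y k := t k - pi ^+ 2 *: t k.+1.
  have Ty k : T (y k).
    have [_ Tk _] := st k; have [_ Tk1 _] := st k.+1.
    apply: (TD) => //; rewrite -scaleN1r; apply: (TZ); exact: (TZ).
  have Gy k : spanN (G k) (y k).
    apply: Gsp => //.
    have [sk _ ek] := st k; have [sk1 _ ek1] := st k.+1.
    have -> : pi ^+ k.*2 *: y k = s k.+1 - s k.
      rewrite /y scalerBr scalerA -exprD addn2 -doubleS; apply: helper.
      by rewrite -ek -ek1.
    by apply: spanNB; [apply: spanN_catr | apply: spanN_catl].
  have ty k : t k = y k + pi ^+ 2 *: t k.+1 by rewrite /y subrK.
  have C (W' : set M) : is_submodule W' -> forall m n0,
      (forall k, (n0 <= k < n0 + m)%N -> W' (pi ^+ k *: y k)) ->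
      exists w, W' w /\ pi ^+ n0 *: t n0 = w + pi ^+ (n0 + m.*2) *: t (n0 + m)%N.
    move=> [W0 [WD WZ]]; elim=> [|m IH] n0 hk.
      by exists 0; split; [exact: W0 | rewrite add0r /= !addn0].
    have [w' [Ww' e]] := IH n0.+1 (fun k hk' => hk k ltac:(lia)).
    exists (pi ^+ n0 *: y n0 + pi *: w'); split.
      by apply: WD; [apply: hk; lia | apply: WZ].
    rewrite {1}ty scalerDr -addrA; congr (_ + _).
    rewrite scalerA -exprD (_ : (n0 + 2 = 1 + n0.+1)%N); last by lia.
    rewrite exprD -scalerA e scalerDr expr1; congr (_ + _).
    by rewrite scalerA -exprS; congr (_ ^+ _ *: t _); lia.
  have Ut n1 : U (pi ^+ n1 *: t n1).
    split; first by apply: (TZ); have [] := st n1.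
    move=> N; have [w [Ww e]] := C (W N) (hW N) N n1 (fun k _ =>
      match ltnP k N with
      | LtnNotGeq kN => WQ _ _ (Qmem N k (y k) kN (Gy k))
      | GeqNotLtn Nk => Wbig N k (y k) Nk (Ty k)
      end).
    rewrite e; have [_ [h _]] := hW N; apply: h => //.
    apply: Wbig; [lia | by have [] := st (n1 + N)%N].
  have [w [Ww e]] := C (spanN (Q n)) (spanN_is_submod _) n 0%N
    (fun k hk => Qmem n k (y k) ltac:(lia) (Gy k)).
  have [s0 _ e0] := st 0%N.
  exists (s 0%N + w), (pi ^+ n *: t n); split.
    apply: spanND => //; apply: spanN_catl => //.
  split; first exact: Ut.
  rewrite e0 (_ : pi ^+ 0.*2 *: t 0%N = pi ^+ 0 *: t 0%N) // e.
  by rewrite addrA !add0n scalerA -exprD addnn.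
exists U; split.
  exists T; split => //; split => //; split; first by move=> x [].
  by move=> n; exists (Q n); split; [exact: QT | move=> x [_ /(_ n)]].
split => //; split.
  move=> x Sx; split; first exact: ST.
  move=> N; have [_ /(_ N) [s' [u [hs [[Tu _] ->]]]]] := decomp x Sx.
  by exists s', u.
move=> n; exists (Q n); split; first exact: QU.
by move=> x Sx; have [_ ] := decomp x Sx; apply.
Qed.

Lemma part1 (V : idomainType) (pi : V) (hpi : is_uniformiser pi) (N : lmodType V)
  (BN : set (set N)) : tf_born_module pi BN ->
  tf_born_module pi (compactoid_born pi BN) /\ nuclear pi (compactoid_born pi BN).
Proof.
move=> [[[hfin [hU hsub]] hsm] [htf hpinv]].
have KEY S : compactoid pi BN S -> exists U, compactoid pi BN U /\ is_submodule U /\ S `<=` U /\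
    forall n, exists Q : seq N, (forall q, q \in Q -> U q) /\
      forall x, S x -> exists s u, spanN Q s /\ U u /\ x = s + pi ^+ n *: u.
  move/compactoidE => hS; have [U [hU1 hU2]] := key hpi htf hsub hS.
  by exists U; split => //; apply/compactoidE.
split; last first.
  move=> S /KEY [U [cU [sU [SU hQ]]]]; apply/compactoidE.
  exists U; split => //; split => //; split => //.
split; last first.
  split => //.
  move=> S /compactoidE [T [BT [hT [ST hF]]]]; apply/compactoidE.
  have [T0 [TD TZ]] := hT.
  pose T' := [set x | T (pi *: x)].
  have hT' : is_submodule T'.
    split; first by rewrite /T' /= scaler0.
    split; first by move=> x y; rewrite /T' /= scalerDr; apply: TD.
    by move=> a x; rewrite /T' /= => h; rewrite scalerA mulrC -scalerA; apply: TZ.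
  exists T'; split; first exact: hpinv.
  split => //; split; first by move=> x /ST.
  move=> n; have [F [FT hx]] := hF n.+1.
  have [G [GT Gsp]] := fg_div hpi htf F 1 hT'.
  exists G; split => // x Sx.
  have [s [t [hs [Tt e]]]] := hx _ Sx.
  exists (x - pi ^+ n *: t), t; split; last first.
    by split; [rewrite /T' /=; apply: TZ | rewrite subrK].
  apply: Gsp.
    rewrite /T' /= scalerBr e scalerA -exprS addrK.
    exact: (spanN_submod hT FT hs).
  by rewrite expr1 scalerBr e scalerA -exprS addrK.
split=> [|S /KEY [U [cU [sU [SU _]]]]]; last by exists U.
split.
  move=> A /[dup] fA /finite_seqP [s As].
  have [T [BT [hT AT]]] := hsm A (hfin A fA).
  have [T0 [TD TZ]] := hT.
  apply/compactoidE; exists T; split => //; split => //; split => // n.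
  exists s; split; first by move=> f hf; apply: AT; rewrite As.
  move=> x Ax; exists x, 0; split; first by apply: spanN_mem; move: Ax; rewrite As.
  by rewrite scaler0 addr0.
split.
  move=> A C /compactoidE [T1 [BT1 [hT1 [AT1 hF1]]]] /compactoidE [T2 [BT2 [hT2 [CT2 hF2]]]].
  have [T [BT [hT T12]]] := hsm _ (hU _ _ BT1 BT2).
  apply/compactoidE; exists T; split => //; split => //; split.
    by move=> x [/AT1|/CT2] h; apply: T12; [left|right].
  move=> n; have [F1 [FT1 h1]] := hF1 n; have [F2 [FT2 h2]] := hF2 n.
  exists (F1 ++ F2); split.
    by move=> f; rewrite mem_cat => /orP [/FT1|/FT2] h; apply: T12; [left|right].
  move=> x [/h1|/h2] [s [t [hs [Tt ->]]]]; exists s, t.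
    by split; [apply: spanN_catl | split => //; apply: T12; left].
  by split; [apply: spanN_catr | split => //; apply: T12; right].
move=> A C /compactoidE [T [BT [hT [AT hF]]]] CA; apply/compactoidE.
exists T; split => //; split => //; split; first by move=> x /CA /AT.
move=> n; have [F [FT h]] := hF n; exists F; split => // x /CA; exact: h.
Qed.

Theorem lemma4p3 (V : idomainType) (pi : V) (hV : complete_dvr pi) :
  (forall (N : lmodType V) (BN : set (set N)),
      tf_born_module pi BN ->
      tf_born_module pi (compactoid_born pi BN) /\
      nuclear pi (compactoid_born pi BN)) /\
  (forall (M N : lmodType V) (BM : set (set M)) (BN : set (set N)),
      tf_born_module pi BM -> nuclear pi BM ->
      tf_born_module pi BN ->
      forall f : {linear M -> N},
        bounded_map BM BN f <-> bounded_map BM (compactoid_born pi BN) f).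
Proof.
have hpi := hV.1.
split; first by move=> N BN; apply: part1.
move=> M N BM BN _ nucM [[[_ [_ hsub]] _] _] f; split.
  move=> bf S BS; have /compactoidE [T [BT [hT [ST hF]]]] := nucM S BS.
  have [T0 [TD TZ]] := hT.
  apply/compactoidE; exists (f @` T); split; first exact: bf.
  split.
    split; first by exists 0 => //; rewrite linear0.
    split.
      by move=> _ _ [x Tx <-] [y Ty <-]; exists (x + y); [apply: TD | rewrite linearD].
    by move=> a _ [x Tx <-]; exists (a *: x); [apply: TZ | rewrite linearZ].
  split; first by move=> _ [x Sx <-]; exists x => //; apply: ST.
  move=> n; have [F [FT h]] := hF n; exists (map f F); split.
    by move=> q /mapP [x hx ->]; exists x => //; apply: FT.
  move=> _ [x Sx <-]; have [s [t [hs [Tt ->]]]] := h x Sx.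
  exists (f s), (f t); split; first exact: spanN_map.
  by split; [exists t | rewrite linearD linearZ].
move=> bf S BS; have /compactoidE [T [BT [hT [ST _]]]] := bf S BS.
exact: hsub BT ST.
Qed.
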